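(* For a $K$-armed bandit with rewards $r\in\mathbb{R}^K$, a full-support policy $\pi$, and step size $\eta>0$, let $\pi'(i)=\pi(i)e^{\eta f_i}/Z$ with $Z=\mathbb{E}_\pi[e^{\eta f}]=\sum_{i}\pi(i)e^{\eta f_i}$. Then, with $V=\pi^\top r$ and $V'=\pi'^\top r$, \[ V'-V=\frac{\mathrm{Cov}_\pi(e^{\eta f},U)}{\mathbb{E}_\pi[e^{\eta f}]}=\frac1Z\sum_{i:\,U_i>0}\pi_iU_i\big(e^{\eta U_i}-1\big)\;\ge\;0. \]
   Context: $U_i:=r(i)-\pi^\top r$ is the advantage of arm $i$, $f_i:=U_i\mathbf{1}\{U_i>0\}$ is the gated advantage, $\pi_i:=\pi(i)$, and $\mathrm{Cov}_\pi$ denotes covariance under $i\sim\pi$. This is the discrete EG update. *)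

(* Defs.v *)
From mathcomp Require Import all_boot all_order all_algebra.
From mathcomp Require Import all_classical all_reals all_analysis.
Set Implicit Arguments. Unset Strict Implicit. Unset Printing Implicit Defensive.
Import Order.TTheory GRing.Theory Num.Theory.
Local Open Scope ring_scope.

Section Bandit.
Variables (R : realType) (K : nat).

Definition Epi (pi : 'I_K -> R) (X : 'I_K -> R) : R := \sum_i pi i * X i.

Definition Covpi (pi : 'I_K -> R) (X Y : 'I_K -> R) : R :=
  Epi pi (fun i => X i * Y i) - Epi pi X * Epi pi Y.

Definition value (pi r : 'I_K -> R) : R := \sum_i pi i * r i.

Definition adv (pi r : 'I_K -> R) (i : 'I_K) : R := r i - value pi r.

Definition gadv (pi r : 'I_K -> R) (i : 'I_K) : R :=
  if 0 < adv pi r i then adv pi r i else 0.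

Definition Znorm (pi r : 'I_K -> R) (eta : R) : R :=
  \sum_i pi i * expR (eta * gadv pi r i).

Definition eg_update (pi r : 'I_K -> R) (eta : R) (i : 'I_K) : R :=
  pi i * expR (eta * gadv pi r i) / Znorm pi r eta.

End Bandit.

(* Main.v *)
Require Import Defs.
From mathcomp Require Import all_boot all_order all_algebra.
From mathcomp Require Import all_classical all_reals all_analysis.
Import Order.TTheory GRing.Theory Num.Theory.
Local Open Scope ring_scope.

Theorem lemma5 (R : realType) (K : nat) (r pi : 'I_K -> R) (eta : R)
  (hpos : forall i, 0 < pi i) (hsum : \sum_i pi i = 1) (heta : 0 < eta) :
  let V := value pi r in
  let V' := value (eg_update pi r eta) r in
  let Z := Znorm pi r eta in
  [/\ V' - V = Covpi pi (fun i => expR (eta * gadv pi r i)) (adv pi r)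
                 / Epi pi (fun i => expR (eta * gadv pi r i)),
      V' - V = Z^-1 * \sum_(i | 0 < adv pi r i)
                 pi i * adv pi r i * (expR (eta * adv pi r i) - 1)
    & 0 <= V' - V].
Proof.
move=> V V' Z.
set e := fun i => expR (eta * gadv pi r i).
have Zpos : 0 < Z.
  apply: (lt_le_trans ltr01); rewrite -hsum /Z /Znorm; apply: ler_sum => i _.
  rewrite ler_pMr // ; apply: le_trans (expR_ge1Dx _).
  rewrite lerDl; apply: mulr_ge0; first exact: (ltW heta).
  rewrite /gadv; case: ifP => // h; exact: (ltW h).
have sumU : \sum_i pi i * adv pi r i = 0.
  rewrite /adv; under eq_bigr => i _ do rewrite mulrBr.
  by rewrite sumrB -mulr_suml hsum mul1r /value subrr.
set S := \sum_i pi i * e i * adv pi r i.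
have key : V' - V = S / Z.
  have Zne : Z != 0 by rewrite gt_eqF.
  rewrite /V' /V /value /eg_update /S /adv.
  apply: (mulIf Zne); rewrite mulrBl divfK //.
  rewrite mulr_suml [X in _ - X]mulrC.
  have -> : \sum_i pi i * expR (eta * gadv pi r i) / Znorm pi r eta * r i * Z
          = \sum_i pi i * e i * r i.
    by apply: eq_bigr => i _; rewrite /Z mulrAC divfK.
  under [in RHS]eq_bigr => i _ do rewrite mulrBr.
  rewrite sumrB -mulr_suml; congr (_ - _); congr (_ * _).
have S2 : S = \sum_(i | 0 < adv pi r i)
                 pi i * adv pi r i * (expR (eta * adv pi r i) - 1).
  have -> : S = \sum_i pi i * adv pi r i * (e i - 1).
    under [RHS]eq_bigr => i _ do rewrite mulrBr mulr1.
    by rewrite sumrB sumU subr0 /S; apply: eq_bigr => i _; rewrite mulrAC.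
  rewrite [RHS]big_mkcond /=; apply: eq_bigr => i _.
  rewrite /e /gadv; case: ifP => // _.
  by rewrite mulr0 expR0 subrr mulr0.
split.
- rewrite key /Covpi /Epi -/e.
  have -> : \sum_i pi i * adv pi r i = 0 by [].
  rewrite mulr0 subr0 /Z /Znorm -/e; congr (_ / _).
  by apply: eq_bigr => i _; rewrite mulrA.
- by rewrite key S2 mulrC.
- rewrite key; apply: divr_ge0; last exact: (ltW Zpos).
  rewrite S2; apply: sumr_ge0 => i Hi.
  apply: mulr_ge0; first by apply: mulr_ge0; [exact: (ltW (hpos i))|exact: (ltW Hi)].
  rewrite subr_ge0; apply: le_trans (expR_ge1Dx _).
  by rewrite lerDl; apply: mulr_ge0; [exact: (ltW heta)|exact: (ltW Hi)].
Qed.
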